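(* Let $u$ be a quasi-definite linear functional on $\mathbb C[\boldsymbol x]$, $\boldsymbol\gamma:I\to\mathbb R^D$ a smooth curve on an interval $I\subset\mathbb R$, $w:I\to\mathbb C$ a weight, $v$ the linear functional $\langle v,P\rangle=\int_IP(\boldsymbol\gamma(s))w(s)\,ds$, and $\hat u=u+v$, assumed quasi-definite. Put $\pi_{[m]}(t)=P_{[m]}(\boldsymbol\gamma(t))$, $\hat\pi_{[n]}(t)=\hat P_{[n]}(\boldsymbol\gamma(t))$ and $A_{[l],[m]}=\int_I\pi_{[l]}(s)\pi_{[m]}(s)^\top w(s)\,ds$. Then for $n\ge1$ $$\hat\pi_{[n]}(t)=\Theta_*\begin{pmatrix}H_{[0]}+A_{[0],[0]}&\cdots&A_{[0],[n-1]}&\pi_{[0]}(t)\\ \vdots&\ddots&\vdots&\vdots\\ A_{[n-1],[0]}&\cdots&H_{[n-1]}+A_{[n-1],[n-1]}&\pi_{[n-1]}(t)\\ A_{[n],[0]}&\cdots&A_{[n],[n-1]}&\pi_{[n]}(t)\end{pmatrix},$$ and $$\hat P_{[n]}(\boldsymbol x)=P_{[n]}(\boldsymbol x)-\int_I\hat\pi_{[n]}(s)K_{n-1}(\boldsymbol\gamma(s),\boldsymbol x)w(s)\,ds,\qquad \hat H_{[n]}=H_{[n]}+\int_I\hat\pi_{[n]}(s)\pi_{[n]}(s)^\top w(s)\,ds.$$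
   Context: Multi-indices ordered by graded lexicographic order; $\chi(\boldsymbol x)$ the semi-infinite vector of monomials with blocks $\chi_{[k]}$. For a linear functional $u$ on $\mathbb C[\boldsymbol x]$ (applied entrywise), moment matrix $G=\langle u,\chi\chi^\top\rangle$; quasi-definite: all block truncations nonsingular; then $G=S^{-1}HS^{-\top}$ with $S$ block lower unitriangular and $H$ block diagonal with blocks $H_{[k]}$; $P=S\chi$ with blocks $P_{[k]}$ are the monic orthogonal polynomials; hats refer to $\hat u$. $K_{n-1}(\boldsymbol x,\boldsymbol y)=\sum_{m=0}^{n-1}P_{[m]}(\boldsymbol x)^\top H_{[m]}^{-1}P_{[m]}(\boldsymbol y)$. Last quasi-determinant: $\Theta_*\begin{pmatrix}A&B\\C&D\end{pmatrix}=D-CA^{-1}B$, last block row/column being the last displayed ones. *)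

(* Defs.v *)
From HB Require Import structures.
From mathcomp Require Import all_boot all_order all_algebra.
From mathcomp Require Import mpoly.
From mathcomp Require Import complex.
From mathcomp Require Import classical_sets boolp reals ereal set_interval
  topology normedtype derive measure lebesgue_measure lebesgue_integral.

Set Implicit Arguments.
Unset Strict Implicit.
Unset Printing Implicit Defensive.

Import Order.TTheory GRing.Theory Num.Theory.
Import numFieldNormedType.Exports.
Local Open Scope ring_scope.

Section Defs.
Variables (R : realType) (D : nat).
Local Notation C := R[i].
Local Notation mon := 'X_{1..D}.
Local Notation poly := {mpoly C[D]}.

(* monomials (multi-indices) of total degree < n : the indices of the
   first n blocks [0],...,[n-1] *)
Local Notation lmon n := ('X_{1..D < n}).
(* monomials of total degree exactly k : the indices of block [k] *)
Definition dmon (k : nat) := {m : 'X_{1..D < k.+1} | mdeg m == k}.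
Definition dmon_val k (a : dmon k) : mon := bmnm (val a).

(* a matrix with rows/columns indexed by a finType T, viewed as a mathcomp
   square matrix (via an enumeration of T; all uses below are independent
   of the enumeration). *)
Definition fmx (T : finType) (f : T -> T -> C) : 'M[C]_#|T| :=
  \matrix_(i, j) f (enum_val i) (enum_val j).
Definition finv (T : finType) (f : T -> T -> C) : T -> T -> C :=
  fun a b => invmx (fmx f) (enum_rank a) (enum_rank b).

(* last quasi-determinant of the block matrix ( A B ; Cm Dm ) :
   Theta_* = Dm - Cm A^{-1} B *)
Definition qdet_last (T U V : finType) (A : T -> T -> C) (B : T -> U -> C)
  (Cm : V -> T -> C) (Dm : V -> U -> C) : V -> U -> C :=
  fun v x => Dm v x - \sum_(a : T) \sum_(b : T) Cm v a * finv A a b * B b x.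

Definition linear_functional (u : poly -> C) : Prop :=
  forall (c : C) (p q : poly), u (c *: p + q) = c * u p + u q.

Definition moment (u : poly -> C) (a b : mon) : C := u ('X_[a] * 'X_[b]).

Definition quasi_definite (u : poly -> C) : Prop :=
  forall N : nat, fmx (fun a b : lmon N => moment u a b) \in unitmx.

Definition block_lower_unitriangular (S : mon -> mon -> C) : Prop :=
  forall a b : mon,
    ((mdeg a < mdeg b)%N -> S a b = 0) /\
    (mdeg a = mdeg b -> S a b = (a == b)%:R).

Definition block_diagonal (H : mon -> mon -> C) : Prop :=
  forall a b : mon, mdeg a <> mdeg b -> H a b = 0.

(* (S G S^T)(a,b); the sums are finite since S is block lower triangular *)
Definition sandwich (S G : mon -> mon -> C) (a b : mon) : C :=
  \sum_(c : lmon (mdeg a).+1) \sum_(d : lmon (mdeg b).+1)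
     S a c * G c d * S b d.

(* S, H give the Gauss-Borel factorization G = S^{-1} H S^{-T} of the
   moment matrix of u (equivalently S G S^T = H) *)
Definition gauss_borel (u : poly -> C) (S H : mon -> mon -> C) : Prop :=
  [/\ block_lower_unitriangular S, block_diagonal H &
      forall a b : mon, sandwich S (moment u) a b = H a b].

Definition OP (S : mon -> mon -> C) (a : mon) : poly :=
  \sum_(c : lmon (mdeg a).+1) S a c *: 'X_[c].

Definition Hinv (H : mon -> mon -> C) (m : nat) : dmon m -> dmon m -> C :=
  finv (fun a b : dmon m => H (dmon_val a) (dmon_val b)).

Definition CDkernel (S H : mon -> mon -> C) (N : nat) (y x : 'I_D -> C) : C :=
  \sum_(m < N.+1) \sum_(a : dmon m) \sum_(b : dmon m)
     (OP S (dmon_val a)).@[y] * Hinv H a b * (OP S (dmon_val b)).@[x].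

Local Open Scope complex_scope.

Definition ptC (gam : R -> 'I_D -> R) (s : R) : 'I_D -> C :=
  fun i => (gam s i)%:C.

Definition cint (I : interval R) (f : R -> C) : C :=
  (Rintegral lebesgue_measure [set` I] (fun s => complex.Re (f s)))%:C
  + 'i * (Rintegral lebesgue_measure [set` I] (fun s => complex.Im (f s)))%:C.

Definition cintegrable (I : interval R) (f : R -> C) : Prop :=
  lebesgue_measure.-integrable [set` I] (fun s => (complex.Re (f s))%:E) /\
  lebesgue_measure.-integrable [set` I] (fun s => (complex.Im (f s))%:E).

Definition smooth_curve (I : interval R) (gam : R -> 'I_D -> R) : Prop :=
  forall (i : 'I_D) (k : nat) (t : R), interior ([set` I] : set R) t ->
    derivable (derive1n k (fun s => gam s i)) t 1.

Definition curve_functional (I : interval R) (gam : R -> 'I_D -> R)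
  (w : R -> C) (p : poly) : C :=
  cint I (fun s => p.@[ptC gam s] * w s).

Definition pi_curve (S : mon -> mon -> C) (gam : R -> 'I_D -> R)
  (a : mon) (t : R) : C :=
  (OP S a).@[ptC gam t].

Definition Amat (I : interval R) (S : mon -> mon -> C) (gam : R -> 'I_D -> R)
  (w : R -> C) (a b : mon) : C :=
  cint I (fun s => pi_curve S gam a s * pi_curve S gam b s * w s).

End Defs.

Notation lmon D n := ('X_{1..D < n}) (only parsing).

(* Main.v *)
Require Import Defs.
From HB Require Import structures.
From mathcomp Require Import all_boot all_order all_algebra.
From mathcomp Require Import mpoly ring.
From mathcomp Require Import complex.
From mathcomp Require Import classical_sets boolp reals ereal set_interval
  topology normedtype derive measure lebesgue_measure lebesgue_integral.
Import Order.TTheory GRing.Theory Num.Theory.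
Local Open Scope ring_scope.
Set Implicit Arguments. Unset Strict Implicit.


Section Cint.
Variable (R : realType).
Local Notation mu := (@lebesgue_measure R).

Lemma intZ (I : interval R) (f : R -> R) (k : R) :
  mu.-integrable [set` I] (EFin \o f) -> mu.-integrable [set` I] (EFin \o (fun s => k * f s)).
Proof.
move=> h; have := integrableZl _ k h; move/(_ (measurable_itv I)).
by congr (_.-integrable _ _); apply: funext => s /=; rewrite EFinM.
Qed.

Lemma intD (I : interval R) (f g : R -> R) :
  mu.-integrable [set` I] (EFin \o f) -> mu.-integrable [set` I] (EFin \o g) ->
  mu.-integrable [set` I] (EFin \o (fun s => f s + g s)).
Proof.
move=> hf hg; have := integrableD _ hf hg; move/(_ (measurable_itv I)).
by congr (_.-integrable _ _); apply: funext => s /=; rewrite EFinD.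
Qed.

Lemma RintL (I : interval R) (f g : R -> R) (k : R) :
  mu.-integrable [set` I] (EFin \o f) -> mu.-integrable [set` I] (EFin \o g) ->
  Rintegral mu [set` I] (fun s => k * f s + g s) =
  k * Rintegral mu [set` I] f + Rintegral mu [set` I] g.
Proof.
move=> hf hg.
have h1 := RintegralD _ (intZ k hf) hg; move/(_ (measurable_itv I)): h1 => ->.
have h2 := RintegralZl _ _ hf; move/(_ k (measurable_itv I)): h2 => ->.
done.
Qed.

Lemma cint_lin (I : interval R) (f g : R -> R[i]) (c : R[i]) :
  cintegrable I f -> cintegrable I g ->
  cint I (fun s => c * f s + g s) = c * cint I f + cint I g.
Proof.
case=> [fr fi] [gr gi]; rewrite /cint.
case: c => a b.
have -> : (fun s => complex.Re ((a +i* b)%C * f s + g s)) =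
   (fun s => a * complex.Re (f s) + ((- b) * complex.Im (f s) + complex.Re (g s))).
  by apply: funext => s; case: (f s) => ? ?; case: (g s) => ? ? /=; rewrite mulNr addrA.
have -> : (fun s => complex.Im ((a +i* b)%C * f s + g s)) =
   (fun s => a * complex.Im (f s) + (b * complex.Re (f s) + complex.Im (g s))).
  by apply: funext => s; case: (f s) => ? ?; case: (g s) => ? ? /=; rewrite addrA.
rewrite !RintL //; try by apply: intD => //; apply: intZ.
set x1 := Rintegral _ _ _; set x2 := Rintegral _ _ _; set x3 := Rintegral _ _ _;
set x4 := Rintegral _ _ _.
by apply/eqP; rewrite eq_complex /=; apply/andP; split; apply/eqP; ring.
Qed.
Lemma cint_ext (I : interval R) (f g : R -> R[i]) :
  (forall s, f s = g s) -> cint I f = cint I g.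
Proof. by move=> h; congr cint; apply: funext. Qed.
End Cint.


Section FMX.
Variable (R : realType).
Local Notation C := R[i].

Lemma sum_enum (T : finType) (F : T -> C) :
  \sum_(k < #|T|) F (enum_val k) = \sum_(x : T) F x.
Proof.
by rewrite (reindex (@enum_val T T)) //; apply: onW_bij; exact: enum_val_bij.
Qed.

Lemma finvl (T : finType) (f : T -> T -> C) : fmx f \in unitmx ->
  forall a c : T, \sum_(b : T) Defs.finv f a b * f b c = (a == c)%:R.
Proof.
move=> U a c; have := mulVmx U; move/matrixP/(_ (enum_rank a) (enum_rank c)).
rewrite !mxE (inj_eq enum_rank_inj) => <-.
rewrite -sum_enum; apply: eq_bigr => k _; rewrite /fmx !mxE enum_rankK.
by rewrite /Defs.finv enum_valK.
Qed.

Lemma finvr (T : finType) (f : T -> T -> C) : fmx f \in unitmx ->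
  forall a c : T, \sum_(b : T) f a b * Defs.finv f b c = (a == c)%:R.
Proof.
move=> U a c; have := mulmxV U; move/matrixP/(_ (enum_rank a) (enum_rank c)).
rewrite !mxE (inj_eq enum_rank_inj) => <-.
rewrite -sum_enum; apply: eq_bigr => k _; rewrite /fmx !mxE enum_rankK.
by rewrite /Defs.finv enum_valK.
Qed.

Lemma fmx_inj (T : finType) (f : T -> T -> C) : fmx f \in unitmx ->
  forall y : T -> C, (forall c : T, \sum_(b : T) y b * f b c = 0) -> forall b, y b = 0.
Proof.
move=> U y hy b.
have : \sum_c (\sum_b y b * f b c) * Defs.finv f c b = 0.
  by apply: big1 => c _; rewrite hy mul0r.
under eq_bigr do rewrite mulr_suml.
rewrite exchange_big /=.
under eq_bigr do (under eq_bigr do rewrite -mulrA; rewrite -mulr_sumr finvr //).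
rewrite (bigD1 b) //= eqxx mulr1 big1 ?addr0 // => b' hb'.
by rewrite (negbTE hb') mulr0.
Qed.

Lemma fmx_unit (T : finType) (f : T -> T -> C) :
  (forall y : T -> C, (forall c : T, \sum_(b : T) y b * f b c = 0) -> forall b, y b = 0) ->
  fmx f \in unitmx.
Proof.
move=> H; rewrite -row_free_unit -kermx_eq0; apply/negPn/negP.
move/rowV0Pn => [v /sub_kermxP vM]; apply/negP; rewrite negbK.
apply/eqP/rowP => k; rewrite mxE.
have -> : v 0 k = (fun b => v 0 (enum_rank b)) (enum_val k) by rewrite /= enum_valK.
apply: (H (fun b => v 0 (enum_rank b))) => c.
move/matrixP/(_ 0 (enum_rank c)): vM; rewrite !mxE => e; apply: etrans e.
rewrite -sum_enum; apply: eq_bigr => j _; by rewrite /fmx !mxE enum_rankK enum_valK.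
Qed.
End FMX.


Section Poly.
Variables (R : realType) (D : nat).
Local Notation C := R[i].
Local Notation mon := 'X_{1..D}.
Local Notation poly := {mpoly C[D]}.
Implicit Types (S H : mon -> mon -> C) (E Q : poly) (a : mon).

Lemma lfD (phi : poly -> C) : linear_functional phi ->
  forall p q, phi (p + q) = phi p + phi q.
Proof. by move=> h p q; have := h 1 p q; rewrite scale1r mul1r. Qed.

Lemma lf0 (phi : poly -> C) : linear_functional phi -> phi 0 = 0.
Proof.
move=> h; have := lfD h 0 0; rewrite addr0.
by move/(congr1 (fun x => x - phi 0)); rewrite subrr addrK.
Qed.

Lemma lfZ (phi : poly -> C) : linear_functional phi ->
  forall c p, phi (c *: p) = c * phi p.
Proof. by move=> h c p; have := h c p 0; rewrite !addr0 lf0 // addr0. Qed.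

Lemma lf_sum (phi : poly -> C) : linear_functional phi ->
  forall (I : Type) (r : seq I) (P : pred I) (F : I -> poly),
  phi (\sum_(i <- r | P i) F i) = \sum_(i <- r | P i) phi (F i).
Proof. by move=> h I r P F; apply: (big_morph phi (lfD h) (lf0 h)). Qed.

Lemma lfN (phi : poly -> C) : linear_functional phi ->
  forall p, phi (- p) = - phi p.
Proof. by move=> h p; rewrite -scaleN1r lfZ // mulN1r. Qed.

Lemma lfB (phi : poly -> C) : linear_functional phi ->
  forall p q, phi (p - q) = phi p - phi q.
Proof. by move=> h p q; rewrite lfD // lfN. Qed.

Definition deglt (k : nat) (p : poly) := forall m : mon, (k <= mdeg m)%N -> p@_m = 0.

Lemma deglt0 k : deglt k 0.
Proof. by move=> m _; rewrite mcoeff0. Qed.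

Lemma degltD k p q : deglt k p -> deglt k q -> deglt k (p + q).
Proof. by move=> hp hq m hm; rewrite mcoeffD hp // hq // addr0. Qed.

Lemma degltN k p : deglt k p -> deglt k (- p).
Proof. by move=> hp m hm; rewrite mcoeffN hp // oppr0. Qed.

Lemma degltB k p q : deglt k p -> deglt k q -> deglt k (p - q).
Proof. by move=> hp hq; apply: degltD => //; exact: degltN. Qed.

Lemma degltZ k c p : deglt k p -> deglt k (c *: p).
Proof. by move=> hp m hm; rewrite mcoeffZ hp // mulr0. Qed.

Lemma deglt_sum k (I : Type) (r : seq I) (P : pred I) (F : I -> poly) :
  (forall i, P i -> deglt k (F i)) -> deglt k (\sum_(i <- r | P i) F i).
Proof.
by move=> h; apply: (big_ind (deglt k)) => //; [exact: deglt0 | exact: degltD].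
Qed.

Lemma sum_delta k (F : mon -> C) (m : mon) :
  \sum_(c : 'X_{1..D < k}) F c * ((c : mon) == m)%:R =
  if (mdeg m < k)%N then F m else 0.
Proof.
case: ifP => h.
  rewrite (bigD1 (BMultinom h)) //= eqxx mulr1 big1 ?addr0 // => c hc.
  case: eqP => [e|]; last by rewrite mulr0.
  suff ce : c = BMultinom h by rewrite ce eqxx in hc.
  exact: val_inj.
apply: big1 => c _; case: eqP => [e|]; last by rewrite mulr0.
by move: h; rewrite -e bmdeg.
Qed.

Lemma deglt_expand k E : deglt k E ->
  E = \sum_(c : 'X_{1..D < k}) E@_c *: 'X_[c].
Proof.
move=> h; apply/mpolyP => m; rewrite raddf_sum /=.
under eq_bigr do rewrite mcoeffZ mcoeffX.
rewrite (sum_delta _ (fun c => E@_c)); case: ifP => // hm; apply: h; by rewrite leqNgt hm.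
Qed.

Lemma OP_coef S : block_lower_unitriangular S -> forall a m, (OP S a)@_m = S a m.
Proof.
move=> hS a m; rewrite /OP raddf_sum /=.
under eq_bigr do rewrite mcoeffZ mcoeffX.
rewrite (sum_delta _ (S a)); case: ifP => // hm.
by rewrite (hS a m).1 // ltnNge -ltnS hm.
Qed.

Lemma deglt_OP S k a : block_lower_unitriangular S -> (mdeg a < k)%N ->
  deglt k (OP S a).
Proof.
move=> hS ha m hm; rewrite OP_coef //; apply: (hS a m).1.
exact: leq_trans ha hm.
Qed.

Lemma deglt_OPB (S1 S2 : mon -> mon -> C) a : block_lower_unitriangular S1 ->
  block_lower_unitriangular S2 -> deglt (mdeg a) (OP S1 a - OP S2 a).
Proof.
move=> h1 h2 m hm; rewrite mcoeffB !OP_coef //.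
move: hm; rewrite leq_eqVlt => /orP[/eqP e|hlt].
  by rewrite (h1 a m).2 // (h2 a m).2 // subrr.
by rewrite (h1 a m).1 // (h2 a m).1 // subrr.
Qed.

Lemma orth_ind phi S E k : linear_functional phi ->
  block_lower_unitriangular S ->
  (forall d : mon, (mdeg d < k)%N -> phi (E * OP S d) = 0) ->
  forall c : mon, (mdeg c < k)%N -> phi (E * 'X_[c]) = 0.
Proof.
move=> hl hS hd.
suff H : forall j (c : mon), (mdeg c < j)%N -> (mdeg c < k)%N ->
  phi (E * 'X_[c]) = 0 by move=> c hc; exact: (H _ c (ltnSn _) hc).
elim=> [//|j IH] c hcj hck.
have := hd c hck; rewrite /OP mulr_sumr lf_sum //.
rewrite (bigD1 (BMultinom (ltnSn (mdeg c)))) //= big1.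
  by rewrite addr0 -scalerAr lfZ // (hS c c).2 // eqxx mul1r.
move=> d hd'; rewrite -scalerAr lfZ //.
case: (ltngtP (mdeg d) (mdeg c)) => e.
- by rewrite (IH d) ?mulr0 //; [exact: leq_trans e hcj | exact: ltn_trans e hck].
- by have := bmdeg d; rewrite ltnS leqNgt e.
- rewrite (hS c d).2 //; case: eqP => [ee|]; last by rewrite mul0r.
  suff ce : d = BMultinom (ltnSn (mdeg c)) by rewrite ce eqxx in hd'.
  exact: val_inj.
Qed.

Lemma nondeg phi k E : linear_functional phi -> quasi_definite phi -> deglt k E ->
  (forall c : mon, (mdeg c < k)%N -> phi (E * 'X_[c]) = 0) -> E = 0.
Proof.
move=> hl hq hE hc.
have U := hq k.
have y0 := fmx_inj U (y := fun c : 'X_{1..D < k} => E@_c).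
apply/mpolyP => m; rewrite mcoeff0.
case: (ltnP (mdeg m) k) => hm; last exact: hE.
have -> : m = BMultinom hm by [].
apply: y0 => c; have := hc c (bmdeg c).
rewrite {1}(deglt_expand hE) mulr_suml lf_sum // => e; apply: etrans e.
by apply: eq_bigr => b _; rewrite -scalerAl lfZ.
Qed.

Lemma uniq_zero phi S k E : linear_functional phi -> quasi_definite phi ->
  block_lower_unitriangular S -> deglt k E ->
  (forall d : mon, (mdeg d < k)%N -> phi (E * OP S d) = 0) -> E = 0.
Proof.
move=> hl hq hS hE hd; apply: (nondeg hl hq hE); exact: orth_ind hd.
Qed.

Lemma GB phi S H : linear_functional phi -> gauss_borel phi S H ->
  forall a b, phi (OP S a * OP S b) = H a b.
Proof.
move=> hl [hS hH hG] a b; rewrite -hG /sandwich /OP mulr_suml lf_sum //.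
apply: eq_bigr => c _; rewrite mulr_sumr lf_sum //; apply: eq_bigr => d _.
rewrite -scalerAl -scalerAr !lfZ // /moment; ring.
Qed.

Lemma orth_poly phi S H : linear_functional phi -> gauss_borel phi S H ->
  forall a Q, deglt (mdeg a) Q -> phi (OP S a * Q) = 0.
Proof.
move=> hl hG a Q hQ; have [hS hH _] := hG.
have hX := orth_ind (E := OP S a) (k := mdeg a) hl hS.
rewrite (deglt_expand hQ) mulr_sumr lf_sum //; apply: big1 => c _.
rewrite -scalerAr lfZ // hX ?mulr0 //.
  by move=> d hd; rewrite (GB hl hG) hH // => e; move: hd; rewrite e ltnn.
exact: bmdeg.
Qed.

Lemma tri_indep S k (y : 'X_{1..D < k} -> C) : block_lower_unitriangular S ->
  (forall m : mon, \sum_(b : 'X_{1..D < k}) y b * S b m = 0) -> forall b, y b = 0.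
Proof.
move=> hS hy.
suff H : forall j (b : 'X_{1..D < k}), (k <= mdeg b + j)%N -> y b = 0.
  by move=> b; apply: (H k); rewrite leq_addl.
elim=> [|j IH] b hb.
  by have := bmdeg b; rewrite ltnNge -(addn0 (mdeg b)) hb.
have := hy b; rewrite (bigD1 b) //= big1.
  by rewrite addr0 (hS b b).2 // eqxx mulr1.
move=> b' hb'; case: (ltngtP (mdeg b') (mdeg b)) => e.
- by rewrite (hS b' b).1 // mulr0.
- by rewrite IH ?mul0r // (leq_trans hb) // addnS -addSn leq_add2r.
- rewrite (hS b' b).2 //; case: eqP => [ee|]; last by rewrite mulr0.
  suff ce : b' = b by rewrite ce eqxx in hb'.
  exact: val_inj.
Qed.

End Poly.


Section Blocks.
Variables (R : realType) (D : nat).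
Local Notation C := R[i].
Local Notation mon := 'X_{1..D}.
Local Notation poly := {mpoly C[D]}.
Implicit Types (S H : mon -> mon -> C) (E Q : poly) (a : mon).

Lemma mkd_proof m (d : mon) : mdeg d == m -> (mdeg d < m.+1)%N.
Proof. by move/eqP->. Qed.

Definition mkd m (d : mon) (h : mdeg d == m) : dmon D m :=
  exist _ (BMultinom (mkd_proof h)) h.

Lemma mkdE m (d : mon) (h : mdeg d == m) : dmon_val (mkd h) = d.
Proof. by []. Qed.

Lemma dmon_deg m (b : dmon D m) : mdeg (dmon_val b) = m.
Proof. by apply/eqP; exact: (valP b). Qed.

Lemma dmon_val_inj m : injective (@dmon_val D m).
Proof. by move=> a b e; apply: val_inj; apply: val_inj. Qed.

Lemma Hblock_unit u S H m : linear_functional u -> quasi_definite u ->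
  gauss_borel u S H ->
  fmx (fun a b : dmon D m => H (dmon_val a) (dmon_val b)) \in unitmx.
Proof.
move=> hl hq hG; have [hS hH _] := hG.
apply: fmx_unit => y hy b0.
set Y := \sum_(b : dmon D m) y b *: OP S (dmon_val b).
have Y0 : Y = 0.
  apply: (uniq_zero (k := m.+1) hl hq hS).
    apply: deglt_sum => b _; apply: degltZ; apply: deglt_OP => //.
    by rewrite dmon_deg.
  move=> d hd; rewrite /Y mulr_suml lf_sum //.
  have -> : \sum_(b : dmon D m) u (y b *: OP S (dmon_val b) * OP S d) =
            \sum_(b : dmon D m) y b * H (dmon_val b) d.
    by apply: eq_bigr => b _; rewrite -scalerAl lfZ // (GB hl hG).
  case: (boolP (mdeg d == m)) => hdm.
    by rewrite -(mkdE hdm); apply: hy.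
  apply: big1 => b _; rewrite hH ?mulr0 // dmon_deg => e.
  by move: hdm; rewrite -e eqxx.
have := congr1 (mcoeff (dmon_val b0)) Y0; rewrite mcoeff0 /Y raddf_sum /=.
rewrite (bigD1 b0) //= big1.
  by rewrite addr0 mcoeffZ OP_coef // (hS _ _).2 // eqxx mulr1.
move=> b hb; rewrite mcoeffZ OP_coef // (hS _ _).2; last by rewrite !dmon_deg.
case: eqP => [/dmon_val_inj e|]; last by rewrite mulr0.
by rewrite e eqxx in hb.
Qed.

Lemma M_unit uh S n (M : 'X_{1..D < n} -> 'X_{1..D < n} -> C) :
  linear_functional uh -> quasi_definite uh -> block_lower_unitriangular S ->
  (forall b c : 'X_{1..D < n}, uh (OP S b * OP S c) = M b c) ->
  fmx M \in unitmx.
Proof.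
move=> hl hq hS hM; apply: fmx_unit => y hy.
set Y := \sum_(b : 'X_{1..D < n}) y b *: OP S b.
have Y0 : Y = 0.
  apply: (uniq_zero (k := n) hl hq hS).
    apply: deglt_sum => b _; apply: degltZ; apply: deglt_OP => //.
    exact: bmdeg.
  move=> d hd; rewrite /Y mulr_suml lf_sum //.
  apply: etrans (hy (BMultinom hd)); apply: eq_bigr => b _.
  by rewrite -scalerAl lfZ // -(hM b (BMultinom hd)).
apply: (tri_indep hS) => m.
have := congr1 (mcoeff m) Y0; rewrite mcoeff0 /Y raddf_sum /= => e.
apply: etrans e; apply: eq_bigr => b _; by rewrite mcoeffZ OP_coef.
Qed.

Lemma key_sum u S H n (r : mon -> C) (d : mon) :
  linear_functional u -> quasi_definite u -> gauss_borel u S H ->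
  (mdeg d < n)%N ->
  \sum_(m < n) \sum_(b : dmon D m) \sum_(c : dmon D m)
     r (dmon_val b) * Hinv H b c * H (dmon_val c) d = r d.
Proof.
move=> hl hq hG hd; have [hS hH _] := hG.
rewrite (bigD1 (Ordinal hd)) //= [X in _ + X]big1.
  rewrite addr0.
  have U := Hblock_unit (mdeg d) hl hq hG.
  have hdd : mdeg d == mdeg d by [].
  have F : forall b : dmon D (mdeg d),
      \sum_c Hinv H b c * H (dmon_val c) d = (b == mkd hdd)%:R.
    by move=> b; exact: (finvl U b (mkd hdd)).
  under eq_bigr do (under eq_bigr do rewrite -mulrA; rewrite -mulr_sumr F).
  rewrite (bigD1 (mkd hdd)) //= eqxx mulr1 big1 ?addr0 // => b hb.
  by rewrite (negbTE hb) mulr0.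
move=> m hm; apply: big1 => b _; apply: big1 => c _.
rewrite hH ?mulr0 // dmon_deg => e; move: hm.
suff me : m = Ordinal hd by rewrite me eqxx.
by apply: val_inj; rewrite /= -e.
Qed.

End Blocks.

Unset Implicit Arguments.
Theorem mainTheorem17 (R : realType) (D : nat)
  (u : {mpoly R[i][D]} -> R[i]) (I : interval R)
  (gam : R -> 'I_D -> R) (w : R -> R[i])
  (S H Sh Hh : 'X_{1..D} -> 'X_{1..D} -> R[i]) (n : nat) :
  linear_functional u ->
  quasi_definite u ->
  smooth_curve I gam ->
  (forall p : {mpoly R[i][D]}, cintegrable I (fun s => p.@[ptC gam s] * w s)) ->
  quasi_definite (fun p => u p + curve_functional I gam w p) ->
  gauss_borel u S H ->
  gauss_borel (fun p => u p + curve_functional I gam w p) Sh Hh ->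
  (1 <= n)%N ->
  [/\ (forall t : R, t \in I -> forall a : dmon D n,
         pi_curve Sh gam (dmon_val a) t =
         qdet_last
           (fun b c : 'X_{1..D < n} =>
              (if mdeg b == mdeg c then H b c else 0) + Amat I S gam w b c)
           (fun (b : 'X_{1..D < n}) (_ : unit) => pi_curve S gam b t)
           (fun (a' : dmon D n) (c : 'X_{1..D < n}) =>
              Amat I S gam w (dmon_val a') c)
           (fun (a' : dmon D n) (_ : unit) => pi_curve S gam (dmon_val a') t)
           a tt),
      (forall (x : 'I_D -> R[i]) (a : dmon D n),
         (OP Sh (dmon_val a)).@[x] =
         (OP S (dmon_val a)).@[x]
         - cint I (fun s => pi_curve Sh gam (dmon_val a) s
                            * CDkernel S H n.-1 (ptC gam s) x * w s)) &
      (forall a b : dmon D n,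
         Hh (dmon_val a) (dmon_val b) =
         H (dmon_val a) (dmon_val b)
         + cint I (fun s => pi_curve Sh gam (dmon_val a) s
                            * pi_curve S gam (dmon_val b) s * w s))].
Proof.
move=> hu hq _ hint hqh hG hGh hn.
have hv : linear_functional (curve_functional I gam w).
  move=> c p q; rewrite /curve_functional -cint_lin //.
  by apply: cint_ext => s; rewrite mevalD mevalZ mulrDl mulrA.
have huh : linear_functional (fun p => u p + curve_functional I gam w p).
  by move=> c p q /=; rewrite (hu c p q) (hv c p q) (mulrDr c (u p)) addrACA.
have [hS hH _] := hG; have [hSh hHh _] := hGh.
case: n hn => // n _.
have vA : forall b c, curve_functional I gam w (OP S b * OP S c) = Amat I S gam w b c.
  by move=> b c; rewrite /curve_functional /Amat; apply: cint_ext => s; rewrite mevalM.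
have uhPP : forall b c, (fun p => u p + curve_functional I gam w p) (OP S b * OP S c) =
    (if mdeg b == mdeg c then H b c else 0) + Amat I S gam w b c.
  move=> b c /=; rewrite (GB hu hG) vA; case: eqP => // e.
  by rewrite hH.
split.
- move=> t _ a.
  set uh := (fun p => u p + curve_functional I gam w p) in huh hqh hGh uhPP *.
  pose A := dmon_val a.
  have hA : mdeg A = n.+1 by rewrite /A dmon_deg.
  have U := M_unit huh hqh hS (fun b c : 'X_{1..D < n.+1} => uhPP b c).
  pose F := OP S A - \sum_(b : 'X_{1..D < n.+1}) \sum_(c : 'X_{1..D < n.+1})
     (Amat I S gam w A b * Defs.finv (fun b c : 'X_{1..D < n.+1} =>
        (if mdeg b == mdeg c then H b c else 0) + Amat I S gam w b c) b c)
       *: OP S c.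
  have PF : OP Sh A = F.
    apply/eqP; rewrite -subr_eq0; apply/eqP.
    apply: (uniq_zero (k := n.+1) huh hqh hS).
      rewrite /F opprB addrCA addrC.
      apply: degltD; first by rewrite -hA; exact: deglt_OPB.
      apply: deglt_sum => b _; apply: deglt_sum => c _.
      by apply: degltZ; apply: deglt_OP => //; exact: bmdeg.
    move=> d hd.
    have hdA : (mdeg d < mdeg A)%N by rewrite hA.
    have e1 := orth_poly huh hGh (deglt_OP hS hdA).
    have e2 : u (OP S A * OP S d) + curve_functional I gam w (OP S A * OP S d)
              = Amat I S gam w A d.
      by rewrite (GB hu hG) vA hH ?add0r // hA => e; move: hd; rewrite -e ltnn.
    rewrite /F mulrBl (lfB huh) mulrBl (lfB huh) e1 {1}/uh e2.
    rewrite mulr_suml (lf_sum huh).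
    under eq_bigr do rewrite mulr_suml (lf_sum huh).
    have e3 : forall b c : 'X_{1..D < n.+1},
        uh ((Amat I S gam w A b * Defs.finv (fun b c : 'X_{1..D < n.+1} =>
             (if mdeg b == mdeg c then H b c else 0) + Amat I S gam w b c) b c)
           *: OP S c * OP S d) =
        Amat I S gam w A b * (Defs.finv (fun b c : 'X_{1..D < n.+1} =>
             (if mdeg b == mdeg c then H b c else 0) + Amat I S gam w b c) b c
          * ((fun b c : 'X_{1..D < n.+1} =>
             (if mdeg b == mdeg c then H b c else 0) + Amat I S gam w b c)
             c (BMultinom hd))).
      by move=> b c; rewrite -scalerAl (lfZ huh) /uh (uhPP c d) mulrA.
    under eq_bigr do under eq_bigr do rewrite e3.
    have F1 : forall b : 'X_{1..D < n.+1},
      \sum_(c : 'X_{1..D < n.+1}) Defs.finv (fun b c : 'X_{1..D < n.+1} =>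
             (if mdeg b == mdeg c then H b c else 0) + Amat I S gam w b c) b c
          * ((if mdeg c == mdeg (BMultinom hd) then H c (BMultinom hd) else 0)
             + Amat I S gam w c (BMultinom hd)) = (b == BMultinom hd)%:R.
      by move=> b; exact: (finvl U b (BMultinom hd)).
    under eq_bigr do rewrite -mulr_sumr F1.
    rewrite (bigD1 (BMultinom hd)) //= big1 => [|b hb]; last first.
      by rewrite (negbTE hb) mulr0.
    by rewrite eqxx mulr1 addr0 !subrr.
  rewrite /pi_curve -/A PF /F mevalB /qdet_last; congr (_ - _).
  rewrite [LHS]raddf_sum; apply: eq_bigr => b _.
  rewrite [LHS]raddf_sum; apply: eq_bigr => c _.
  by rewrite /= mevalZ.
- move=> x a.
  pose A := dmon_val a.
  pose r := fun d => curve_functional I gam w (OP Sh A * OP S d).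
  pose Q := \sum_(m < n.+1) \sum_(b : dmon D m) \sum_(c : dmon D m)
              (r (dmon_val b) * Hinv H b c) *: OP S (dmon_val c).
  have hA : mdeg A = n.+1 by rewrite /A dmon_deg.
  have PQ : OP Sh A = OP S A - Q.
    apply/eqP; rewrite -subr_eq0; apply/eqP.
    apply: (uniq_zero (k := n.+1) hu hq hS).
      have -> : OP Sh A - (OP S A - Q) = (OP Sh A - OP S A) + Q.
        by rewrite opprB addrCA addrC.
      apply: degltD; first by rewrite -hA; exact: deglt_OPB.
      apply: deglt_sum => m _; apply: deglt_sum => b _; apply: deglt_sum => c _.
      by apply: degltZ; apply: deglt_OP => //; rewrite dmon_deg.
    move=> d hd.
    have e1 : u (OP Sh A * OP S d) = - r d.
      have hdA : (mdeg d < mdeg A)%N by rewrite hA.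
      have := orth_poly huh hGh (deglt_OP hS hdA).
      by rewrite /= => /eqP; rewrite addr_eq0 => /eqP.
    have e2 : u (OP S A * OP S d) = 0.
      by rewrite (GB hu hG) hH // hA => e; move: hd; rewrite -e ltnn.
    have e3 : u (Q * OP S d) = r d.
      rewrite -(key_sum r hu hq hG hd).
      rewrite /Q mulr_suml lf_sum //; apply: eq_bigr => m _.
      rewrite mulr_suml lf_sum //; apply: eq_bigr => b _.
      rewrite mulr_suml lf_sum //; apply: eq_bigr => c _.
      by rewrite -scalerAl lfZ // (GB hu hG).
    by rewrite mulrBl (lfB hu) mulrBl (lfB hu) e1 e2 e3 sub0r opprK addNr.
  rewrite PQ mevalB; congr (_ - _).
  pose Kp := \sum_(m < n.+1) \sum_(b : dmon D m) \sum_(c : dmon D m)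
              (Hinv H b c * (OP S (dmon_val c)).@[x]) *: OP S (dmon_val b).
  have eK : forall y, CDkernel S H n y x = Kp.@[y].
    move=> y; rewrite /CDkernel /Kp [RHS]raddf_sum; apply: eq_bigr => m _.
    rewrite [RHS]raddf_sum; apply: eq_bigr => b _.
    rewrite [RHS]raddf_sum; apply: eq_bigr => c _.
    by rewrite /= mevalZ [RHS]mulrC mulrA.
  rewrite (@cint_ext _ _ _ (fun s => (OP Sh A * Kp).@[ptC gam s] * w s)); last first.
    by move=> s; rewrite /pi_curve /= eK mevalM.
  rewrite -/(curve_functional I gam w (OP Sh A * Kp)).
  rewrite /Kp mulr_sumr (lf_sum hv) /Q [LHS]raddf_sum; apply: eq_bigr => m _.
  rewrite mulr_sumr (lf_sum hv) [LHS]raddf_sum; apply: eq_bigr => b _.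
  rewrite mulr_sumr (lf_sum hv) [LHS]raddf_sum; apply: eq_bigr => c _.
  rewrite [LHS]/= mevalZ -scalerAr (lfZ hv) -/(r (dmon_val b)).
  by rewrite [RHS]mulrC [RHS]mulrA.
- move=> a b.
  have e1 : u (OP Sh (dmon_val a) * OP S (dmon_val b)) = H (dmon_val a) (dmon_val b).
    rewrite -[OP Sh (dmon_val a)](subrK (OP S (dmon_val a))) mulrDl (lfD hu) (GB hu hG).
    rewrite (mulrC (OP Sh (dmon_val a) - OP S (dmon_val a))) (orth_poly hu hG) ?add0r //.
    have -> : mdeg (dmon_val b) = mdeg (dmon_val a) by rewrite !dmon_deg.
    exact: deglt_OPB.
  rewrite -(GB huh hGh) -[OP Sh (dmon_val b)](subrK (OP S (dmon_val b))) mulrDr (lfD huh).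
  rewrite (orth_poly huh hGh) ?add0r; last first.
    have -> : mdeg (dmon_val a) = mdeg (dmon_val b) by rewrite !dmon_deg.
    exact: deglt_OPB.
  rewrite /= e1; congr (_ + _); rewrite /curve_functional; apply: cint_ext => s.
  by rewrite mevalM.
Qed.
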